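(* Let $D=(V,A)$ be a digraph with minimum in-degree at least 1, and let $\mathcal{L}D=\mathcal{L}_{(A',\phi)}D$ be a partial line digraph of $D$. Then $\mathcal{L}D$ has a nonempty semikernel if and only if $D$ has a nonempty semikernel.
   Context: Digraphs are loopless and without multiple arcs. For $U\subseteq V$, $\omega^-(U)=\{(x,y)\in A: y\in U,\ x\notin U\}$ and $\omega^+(U)=\{(x,y)\in A: x\in U,\ y\notin U\}$; for a vertex $j$, $\omega^-(j)$ is the set of arcs with terminal vertex $j$. For a set of arcs $\Omega$, $H(\Omega)=\{y:(x,y)\in\Omega\}$. The arc $(x,y)$ is also written $xy$. Partial line digraph: given $D=(V,A)$ with minimum in-degree at least 1, take an arc subset $A'\subseteq A$ and a surjective map $\phi:A\to A'$ such that (i) $H(A')=V$; (ii) $\phi$ restricted to $A'$ is the identity, and for every vertex $j\in V$, $\phi(\omega^-(j))\subseteq\omega^-(j)\cap A'$. The partial line digraph $\mathcal{L}_{(A',\phi)}D$ has vertex set $A'$ and arc set $\{(ij,\phi(j,k)) : ij\in A',\ (j,k)\in A\}$. A semikernel of a digraph is an independent vertex set $S$ (no arc joins two vertices of $S$) such that for every arc $(s,x)\in\omega^+(S)$ there is an arc $(x,s')\in\omega^-(S)$. *)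

(* Defs.v *)
From mathcomp Require Import all_boot.
Set Implicit Arguments. Unset Strict Implicit. Unset Printing Implicit Defensive.

(* A digraph on a finite vertex type T is given by its arc relation r : rel T
   (no multiple arcs by construction; looplessness is an explicit hypothesis). *)

Definition independent (T : finType) (r : rel T) (S : {set T}) : Prop :=
  forall x y, x \in S -> y \in S -> ~~ r x y.

Definition semikernel (T : finType) (r : rel T) (S : {set T}) : Prop :=
  independent r S /\
  forall s x, s \in S -> x \notin S -> r s x -> exists2 s', s' \in S & r x s'.

Definition has_nonempty_semikernel (T : finType) (r : rel T) : Prop :=
  exists S : {set T}, S != set0 /\ semikernel r S.

Definition min_indeg_ge1 (V : finType) (arc : rel V) : Prop :=
  forall j, exists i, arc i j.

(* (A', phi) defines a partial line digraph of D = (V, arc).  Arcs are pairs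
   (x,y) with arc x y; A' : {set V * V}; phi is given as a total function on
   V * V, only its values on arcs of D matter. *)
Definition partial_line_data (V : finType) (arc : rel V)
    (A' : {set V * V}) (phi : V * V -> V * V) : Prop :=
  [/\
      (forall a, a \in A' -> arc a.1 a.2),
      (forall b, b \in A' -> exists2 a : V * V, arc a.1 a.2 & phi a = b),
      (forall v, exists u, (u, v) \in A'),
      (forall a, a \in A' -> phi a = a) &
      (forall i j, arc i j -> phi (i, j) \in A' /\ (phi (i, j)).2 = j)].

Definition pld_vertex (V : finType) (A' : {set V * V}) : finType :=
  {a : V * V | a \in A'}.

Definition pld_arc (V : finType) (arc : rel V) (A' : {set V * V})
    (phi : V * V -> V * V) : rel (pld_vertex A') :=
  fun a b => [exists k : V, arc (val a).2 k && (phi ((val a).2, k) == val b)].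
Arguments pld_arc {V} arc A' phi.

(* Main.v *)
Require Import Defs.
From mathcomp Require Import all_boot.

Theorem theorem2p7 (V : finType) (arc : rel V) (A' : {set V * V})
    (phi : V * V -> V * V) :
  irreflexive arc ->
  min_indeg_ge1 arc ->
  partial_line_data arc A' phi ->
  (has_nonempty_semikernel (pld_arc arc A' phi) <-> has_nonempty_semikernel arc).
Proof.
move=> _ _ [sub surj head idA phiP].
pose mk := fun i j (h : arc i j) =>
  (exist _ (phi (i, j)) (proj1 (phiP i j h)) : pld_vertex A').
have mkv : forall i j (h : arc i j), val (mk i j h) = phi (i, j) by [].
have Larc : forall (a : pld_vertex A') k (h : arc (val a).2 k),
    pld_arc arc A' phi a (mk _ _ h).
  by move=> a k h; apply/existsP; exists k; rewrite h /=.
have LarcE : forall (a b : pld_vertex A'), pld_arc arc A' phi a b ->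
    exists2 k, arc (val a).2 k & phi ((val a).2, k) = val b.
  by move=> a b /existsP[k /andP[h /eqP e]]; exists k.
split.
- case=> S' [ne [ind sk]].
  exists [set v | [exists a in S', (val a).2 == v]]; split.
    case/set0Pn: ne => a aS; apply/set0Pn; exists (val a).2.
    by rewrite inE; apply/existsP; exists a; rewrite aS eqxx.
  split.
  + move=> x y; rewrite !inE => /existsP[a /andP[aS /eqP ax]]
      /existsP[b /andP[bS /eqP bx]].
    apply/negP => hxy.
    have h : arc (val a).2 y by rewrite ax.
    have ac := Larc a y h.
    have c2 : (val (mk _ _ h)).2 = y by rewrite mkv (proj2 (phiP _ _ h)).
    case: (boolP (mk _ _ h \in S')) => cS.
      by move: (ind _ _ aS cS); rewrite ac.
    have [s' s'S cs'] := sk _ _ aS cS ac.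
    have [k hk ek] := LarcE _ _ cs'.
    rewrite c2 in hk ek.
    have bs' : pld_arc arc A' phi b s'.
      by apply/existsP; exists k; rewrite bx hk ek eqxx.
    by move: (ind _ _ bS s'S); rewrite bs'.
  + move=> s x; rewrite !inE => /existsP[a /andP[aS /eqP ax]] xS hsx.
    have h : arc (val a).2 x by rewrite ax.
    have ac := Larc a x h.
    have c2 : (val (mk _ _ h)).2 = x by rewrite mkv (proj2 (phiP _ _ h)).
    have cS : mk _ _ h \notin S'.
      apply/negP => cS; move/negP: xS; apply; apply/existsP.
      by exists (mk _ _ h); rewrite cS c2 eqxx.
    have [s' s'S cs'] := sk _ _ aS cS ac.
    have [k hk ek] := LarcE _ _ cs'.
    rewrite c2 in hk ek.
    exists k => //; rewrite inE; apply/existsP; exists s'.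
    by rewrite s'S -ek (proj2 (phiP _ _ hk)) eqxx.
- case=> S [ne [ind sk]].
  exists [set a : pld_vertex A' | (val a).2 \in S]; split.
    case/set0Pn: ne => v vS; have [u uv] := head v.
    apply/set0Pn; exists (exist _ (u, v) uv); by rewrite inE.
  split.
  + move=> a b; rewrite !inE => aS bS; apply/negP => /LarcE[k hk ek].
    have : k = (val b).2 by rewrite -ek (proj2 (phiP _ _ hk)).
    by move=> e; move: (ind _ _ aS bS); rewrite -e hk.
  + move=> a b; rewrite !inE => aS bS /LarcE[k hk ek].
    have e : k = (val b).2 by rewrite -ek (proj2 (phiP _ _ hk)).
    rewrite -e in bS.
    have [s' s'S ks'] := sk _ _ aS bS hk.
    have hb : arc (val b).2 s' by rewrite -e.
    exists (mk _ _ hb); first by rewrite inE mkv (proj2 (phiP _ _ hb)).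
    exact: Larc.
Qed.
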